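(* Let $p>2$ and let $h:[1,\infty)\to[2/p,\infty)$ be a function which is increasing and continuous on $[1,\infty)$, satisfies $h(t)>t-1$ for all $t\ge1$, is differentiable on $(1,\infty)$ with $$h'(t)=\left(\frac2p\right)^{p+1}(h(t))^{2-p}(h(t)-t+1)^{-2},$$ and satisfies $h(1)=h'(1+)=2/p$. Then $h'(t)\le 1$ for all $t>1$.
   Context: $h'(1+)$ denotes the right-hand derivative of $h$ at $1$. *)

(* Defs.v *)
From Stdlib Require Import Reals.
From Coquelicot Require Import Coquelicot.
Open Scope R_scope.

Definition increasing_from1 (h : R -> R) : Prop :=
  forall s t, 1 <= s -> s <= t -> h s <= h t.

Definition continuous_on_from1 (h : R -> R) : Prop :=
  forall t, 1 <= t ->
    filterlim h (within (fun x => 1 <= x) (locally t)) (locally (h t)).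

Definition right_deriv (h : R -> R) (a l : R) : Prop :=
  filterlim (fun s => (h (a + s) - h a) / s) (at_right 0) (locally l).

(* Main.v *)
Require Import Defs.
From Stdlib Require Import Reals.
From Coquelicot Require Import Coquelicot.
From Stdlib Require Import Lra.
Open Scope R_scope.

Theorem lemma4p1 (p : R) (h : R -> R) :
  2 < p ->
  (forall t, 1 <= t -> 2 / p <= h t) ->
  increasing_from1 h ->
  continuous_on_from1 h ->
  (forall t, 1 <= t -> h t > t - 1) ->
  (forall t, 1 < t ->
     is_derive h t (Rpower (2 / p) (p + 1)
                     * Rpower (h t) (2 - p) / (h t - t + 1) ^ 2)) ->
  h 1 = 2 / p ->
  right_deriv h 1 (2 / p) ->
  forall t, 1 < t -> Derive h t <= 1.
Proof.
  intros Hp Hlow Hinc Hcontw Hgt Hder H1 _ t0 Ht0.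
  set (D := fun t => Rpower (2 / p) (p + 1)
                     * Rpower (h t) (2 - p) / (h t - t + 1) ^ 2).
  assert (Hder' : forall t, 1 < t -> is_derive h t (D t)) by exact Hder.
  rewrite (is_derive_unique _ _ _ (Hder' t0 Ht0)).
  assert (H2p : 0 < 2 / p) by (apply Rdiv_lt_0_compat; lra).
  assert (H2p1 : 2 / p < 1) by (apply Rmult_lt_reg_r with p; [lra|];
     unfold Rdiv; rewrite Rmult_assoc, Rinv_l; lra).
  assert (Hhpos : forall t, 1 <= t -> 0 < h t) by (intros t Ht; specialize (Hlow t Ht); lra).
  assert (D1 : D 1 = 2 / p).
  { unfold D. rewrite H1. replace (2/p - 1 + 1) with (2/p) by ring.
    rewrite <- Rpower_plus. replace (p + 1 + (2 - p)) with (INR 3) by (simpl; ring).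
    rewrite Rpower_pow by lra. field; lra. }
  destruct (Rle_or_lt (D t0) 1) as [|Hbad]; [assumption|exfalso].
  set (S := fun s => 1 <= s <= t0 /\ D s <= 1).
  assert (Hb : bound S) by (exists t0; intros s [[_ Hs] _]; exact Hs).
  assert (Hne : exists x, S x) by (exists 1; unfold S; split; [lra | rewrite D1; lra]).
  destruct (completeness S Hb Hne) as [t1 [Hub Hleast]].
  assert (Ht11 : 1 <= t1) by (apply Hub; split; lra).
  assert (Ht1t0 : t1 <= t0) by (apply Hleast; intros s [[_ Hs] _]; exact Hs).
  assert (HA : forall s, t1 < s <= t0 -> D s > 1).
  { intros s Hs. destruct (Rle_or_lt (D s) 1) as [Hs'|]; [|lra].
    assert (s <= t1) by (apply Hub; split; [lra|exact Hs']). lra. }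
  assert (Hcont : forall x, 1 < x -> continuous D x).
  { intros x Hx. apply (@ex_derive_continuous R_AbsRing R_NormedModule). unfold D, Rpower.
    assert (ex_derive h x) by (eexists; apply Hder'; exact Hx).
    assert (0 < h x) by (apply Hhpos; lra).
    assert (h x - x + 1 <> 0) by (specialize (Hgt x ltac:(lra)); lra).
    auto_derive. repeat split; auto. }
  assert (HB : D t1 <= 1).
  { destruct (Req_dec t1 1) as [E|Ne]; [rewrite E, D1; lra|].
    destruct (Rle_or_lt (D t1) 1) as [|Hc]; [assumption|exfalso].
    assert (Hx : 1 < t1) by lra.
    specialize (Hcont t1 Hx).
    assert (Hep : 0 < D t1 - 1) by lra.
    destruct (Hcont _ (locally_ball (D t1) (mkposreal _ Hep))) as [d Hd].
    assert (t1 <= t1 - d / 2).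
    { apply Hleast. intros s [Hs1 Hs2].
      destruct (Rle_or_lt s (t1 - d/2)) as [|Hs]; [assumption|exfalso].
      assert (s <= t1) by (apply Hub; split; assumption).
      assert (Hbs : ball t1 d s).
      { change (Rabs (s - t1) < d). rewrite Rabs_left1 by lra.
        destruct d as [d dp]; simpl in *; lra. }
      specialize (Hd s Hbs). change (Rabs (D s - D t1) < D t1 - 1) in Hd.
      apply Rabs_def2 in Hd. lra. }
    destruct d as [d dp]; simpl in *; lra. }
  assert (Hlt : t1 < t0) by (destruct (Req_dec t1 t0) as [E|]; [subst; lra | lra]).
  set (g := fun t => h t - t + 1).
  assert (Hgs : forall s, t1 < s < t0 -> g s <= g t0).
  { intros s Hs.
    destruct (MVT_cor2 g (fun t => D t - 1) s t0 ltac:(lra)) as [c [Hc1 Hc2]].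
    { intros c Hc. apply is_derive_Reals. unfold g.
      replace (D c - 1) with (D c - 1 + 0) by ring.
      apply @is_derive_plus. apply @is_derive_minus. apply Hder'; lra.
      apply @is_derive_id. apply @is_derive_const. }
    assert (Dc : D c > 1) by (apply HA; lra).
    nra. }
  assert (Hg : g t1 <= g t0).
  { destruct (Rle_or_lt (g t1) (g t0)) as [|Hc]; [assumption|exfalso].
    assert (Hep : 0 < (g t1 - g t0) / 2) by lra.
    destruct (Hcontw t1 Ht11 _ (locally_ball (h t1) (mkposreal _ Hep))) as [d Hd].
    destruct d as [d dp]; simpl in *.
    set (s := t1 + Rmin (Rmin d (t0 - t1)) ((g t1 - g t0) / 2) / 2).
    assert (Hm1 : 0 < Rmin (Rmin d (t0 - t1)) ((g t1 - g t0) / 2)).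
    { apply Rmin_glb_lt; [apply Rmin_glb_lt|]; lra. }
    assert (Hm2 := Rmin_l (Rmin d (t0 - t1)) ((g t1 - g t0) / 2)).
    assert (Hm3 := Rmin_r (Rmin d (t0 - t1)) ((g t1 - g t0) / 2)).
    assert (Hm4 := Rmin_l d (t0 - t1)).
    assert (Hm5 := Rmin_r d (t0 - t1)).
    assert (Hbs : ball t1 d s).
    { change (Rabs (s - t1) < d). unfold s. rewrite Rabs_right by lra. lra. }
    specialize (Hd s Hbs ltac:(unfold s; lra)).
    change (Rabs (h s - h t1) < (g t1 - g t0) / 2) in Hd.
    apply Rabs_def2 in Hd.
    specialize (Hgs s ltac:(unfold s; lra)).
    unfold g in *. unfold s in *. lra. }
  assert (Hh : h t1 <= h t0) by (apply Hinc; lra).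
  assert (Hg1 : 0 < h t1 - t1 + 1) by (specialize (Hgt t1 Ht11); lra).
  unfold g in Hg.
  assert (D t0 <= D t1); [|lra].
  unfold D. unfold Rdiv. apply Rmult_le_compat.
  - apply Rmult_le_pos; unfold Rpower; left; apply exp_pos.
  - left; apply Rinv_0_lt_compat; apply pow_lt; lra.
  - apply Rmult_le_compat_l; [unfold Rpower; left; apply exp_pos|].
    unfold Rpower. destruct (Rle_lt_or_eq_dec _ _ Hh) as [Hl|E]; [|rewrite E; right; reflexivity].
    left. apply exp_increasing.
    assert (ln (h t1) < ln (h t0)) by (apply ln_increasing; [apply Hhpos|]; lra).
    nra.
  - apply Rinv_le_contravar; [apply pow_lt; lra|]. apply pow_incr. lra.
Qed.
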